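(* Let $W$ be a finite Weyl group with root system $R\subset V$, let $U\subseteq V$ be a subspace with orthogonal complement $U^\perp$, let $w\in W$, and let $X=\bigcap_{\alpha\in I(w)\cap R_U}\ker\alpha$ (so $U^\perp\subseteq X$). Then the inversion arrangement $\mathcal{I}(\mathrm{fl}_U(w))$ (an arrangement in $U$) is equal to the quotient $\mathcal{I}(w)_X/U^\perp$ of the localization $\mathcal{I}(w)_X$, under the identification $V/U^\perp\cong U$.
   Context: $R^+$, $R^-$ are the positive and negative roots; $I(w)=\{\alpha\in R^+:w^{-1}\alpha\in R^-\}$; $\mathcal{I}(w)$ is the arrangement of hyperplanes $\ker\alpha$, $\alpha\in I(w)$. $R_U=R\cap U$ is a root system in $U$ with positive roots $R^+\cap U$ and Weyl group $W_U$; $\mathrm{fl}_U(w)$ is the unique element of $W_U$ whose inversion set in $R_U$ is $I(w)\cap U$, and $\mathcal{I}(\mathrm{fl}_U(w))$ is the arrangement in $U$ of the hyperplanes $\{x\in U:(x,\alpha)=0\}$, $\alpha\in I(w)\cap U$. For a flat $X$ of an arrangement $\mathcal{A}$, the localization $\mathcal{A}_X$ consists of the hyperplanes containing $X$; for a subspace $Y$ of the center, $\mathcal{A}/Y$ is the arrangement $\{H/Y\}$ in $V/Y$. *)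

(* Defs.v *)
From HB Require Import structures.
From mathcomp Require Import all_boot all_order all_algebra.
Set Implicit Arguments. Unset Strict Implicit. Unset Printing Implicit Defensive.
Import Order.TTheory GRing.Theory Num.Theory.
Local Open Scope ring_scope.

(* The Euclidean space V is 'rV[F]_n (row vectors) with the standard
   inner product; a subspace of V is the row space of a square matrix. *)
Section Defs.
Variables (F : realFieldType) (n : nat).
Implicit Types (x y a b c : 'rV[F]_n) (w : 'M[F]_n) (R : seq 'rV[F]_n).

Definition dot x y : F := (x *m y^T) 0 0.

(* linear action of a matrix w on V (x |-> w x, written for row vectors) *)
Definition act w x : 'rV[F]_n := x *m w^T.

Definition refl a : 'M[F]_n := 1%:M - (2 / dot a a) *: (a^T *m a).

(* crystallographic reduced root system R (finite, given as a sequence) *)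
Definition root_system R : Prop :=
  [/\ 0 \notin R,
      {in R, forall a, - a \in R},
      {in R &, forall a b, act (refl a) b \in R},
      {in R &, forall a b, exists k : int, 2 * dot b a / dot a a = k%:~R}
    & {in R, forall a (t : F), t *: a \in R -> t = 1 \/ t = -1}].

Inductive refl_group (S : seq 'rV[F]_n) : 'M[F]_n -> Prop :=
  | refl_group1 : refl_group S 1%:M
  | refl_groupS a w : a \in S -> refl_group S w -> refl_group S (refl a *m w).

Definition roots_in R (U : 'M[F]_n) : seq 'rV[F]_n :=
  [seq a <- R | (a <= U)%MS].

(* positive roots determined by a regular vector c : R^+ = {a | (c,a) > 0};
   inversion set I(w) = {a in R^+ | w^{-1} a in R^-} *)
Definition inv_set R c w a : bool :=
  [&& a \in R, 0 < dot c a & dot c (act (invmx w) a) < 0].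

Definition hyp a : 'M[F]_n := kermx a^T.

Definition orth (U : 'M[F]_n) : 'M[F]_n := kermx U^T.

Definition Xflat R c w (U : 'M[F]_n) : 'M[F]_n :=
  (\bigcap_(a <- R | inv_set R c w a && (a <= U)%MS) hyp a)%MS.

(* the arrangement I(v) in U, for v in W_U: hyperplanes {x in U | (x,a)=0},
   a in I(v) computed in the root system R_U; as a predicate on subspaces *)
Definition inv_arr_in R c (U v H : 'M[F]_n) : Prop :=
  exists2 a, inv_set (roots_in R U) c v a & (H == U :&: hyp a)%MS.

(* the arrangement I(w)_X / U^perp, transported to U via the identification
   V/U^perp ~ U given by orthogonal projection onto U *)
Definition loc_quot_arr R c (w U H : 'M[F]_n) : Prop :=
  exists2 b, inv_set R c w b && (Xflat R c w U <= hyp b)%MS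
           & (H == hyp b *m proj_mx <<U>>%MS (orth U))%MS.

End Defs.

(* Main.v *)
Require Import Defs.
From HB Require Import structures.
From mathcomp Require Import all_boot all_order all_algebra.
Import Order.TTheory GRing.Theory Num.Theory.
Local Open Scope ring_scope.

Section Aux.
Variables (F : realFieldType) (n : nat).

Lemma self0 (v : 'rV[F]_n) : v *m v^T = 0 -> v = 0.
Proof.
move=> h; apply/rowP=> i.
have : (v *m v^T) 0 0 = 0 by rewrite h mxE.
rewrite mxE => /psumr_eq0P H.
have /H : forall j : 'I_n, true -> 0 <= v 0 j * v^T j 0.
  by move=> j _; rewrite !mxE -expr2 sqr_ge0.
move=> /(_ i isT); rewrite !mxE => /eqP.
by rewrite mulf_eq0 orbb => /eqP.
Qed.
End Aux.

Section Aux2.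
Variables (F : realFieldType) (n : nat).

Lemma orth_disj m1 m2 (A : 'M[F]_(m1,n)) (B : 'M[F]_(m2,n)) :
  (A <= B)%MS -> (A :&: kermx B^T)%MS = 0.
Proof.
move=> sAB; apply/eqP/rowV0P => v; rewrite sub_capmx => /andP[sv].
have /submxP[y ->] := submx_trans sv sAB.
rewrite sub_kermx => /eqP h; apply: self0.
by rewrite trmx_mul mulmxA h mul0mx.
Qed.

Lemma orth_anti m1 m2 (A : 'M[F]_(m1,n)) (B : 'M[F]_(m2,n)) :
  (A <= B)%MS -> (kermx B^T <= kermx A^T)%MS.
Proof.
by case/submxP=> y ->; rewrite sub_kermx trmx_mul mulmxA mulmx_ker mul0mx.
Qed.

Lemma orth_orth m1 (A : 'M[F]_(m1,n)) : (kermx (kermx A^T)^T == A)%MS.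
Proof.
have sA : (A <= kermx (kermx A^T)^T)%MS.
  rewrite sub_kermx.
  have : (kermx A^T *m A^T)^T = 0 by rewrite mulmx_ker trmx0.
  by rewrite trmx_mul trmxK => ->.
apply/eqmxP; apply: eqmx_sym; apply/eqmxP; case: (mxrank_leqif_eq sA) => _ <-.
rewrite !mxrank_ker !mxrank_tr mxrank_ker mxrank_tr subKn ?rank_leq_col //.
Qed.

Lemma full_sum (U : 'M[F]_n) : row_full (<<U>> + kermx U^T)%MS.
Proof.
rewrite /row_full mxrank_disjoint_sum; last by apply: orth_disj; rewrite genmxE.
by rewrite genmxE mxrank_ker mxrank_tr subnKC ?rank_leq_col.
Qed.

Lemma proj_hyp (U : 'M[F]_n) (a : 'rV[F]_n) : (a <= U)%MS ->
  (U :&: hyp a == hyp a *m proj_mx <<U>>%MS (orth U))%MS.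
Proof.
move=> aU; set P := proj_mx _ _.
have dUV : (<<U>> :&: orth U)%MS = 0 by apply: orth_disj; rewrite genmxE.
apply/andP; split.
  have e := proj_mx_id dUV (_ : (U :&: hyp a <= <<U>>)%MS).
  rewrite -{1}e; last by rewrite genmxE capmxSl.
  by apply: submxMr; apply: capmxSr.
have pU : (hyp a *m P <= U)%MS.
  by apply: submx_trans (proj_mx_sub _ _ _) _; rewrite genmxE.
rewrite sub_capmx pU /= /hyp sub_kermx.
set W := kermx a^T.
have h1 : (W - W *m P <= kermx a^T)%MS.
  have h0 : (W <= <<U>> + orth U)%MS := submx_full _ (full_sum U).
  apply: submx_trans (proj_mx_compl_sub h0) _; exact: orth_anti.
move: h1; rewrite sub_kermx mulmxBl mulmx_ker sub0r oppr_eq0.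
by [].
Qed.

Lemma sums_seq_sup (I : eqType) (r : seq I) (P : pred I) (A_ : I -> 'M[F]_n) i :
  i \in r -> P i -> (A_ i <= \sum_(j <- r | P j) A_ j)%MS.
Proof.
elim: r => // x r IH; rewrite inE big_cons => /orP[/eqP <- -> | ir Pi].
  exact: addsmxSl.
case: (P x); last exact: IH.
exact: submx_trans (IH ir Pi) (addsmxSr _ _).
Qed.

Lemma bigcap_seq_inf (I : eqType) (r : seq I) (P : pred I) (A_ : I -> 'M[F]_n) i :
  i \in r -> P i -> (\bigcap_(j <- r | P j) A_ j <= A_ i)%MS.
Proof.
elim: r => // x r IH; rewrite inE big_cons => /orP[/eqP <- -> | ir Pi].
  exact: capmxSl.
case: (P x); last exact: IH.
exact: submx_trans (capmxSr _ _) (IH ir Pi).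
Qed.
End Aux2.

Theorem mainTheorem12 (F : realFieldType) (n : nat)
    (R : seq 'rV[F]_n) (c : 'rV[F]_n) (U w v : 'M[F]_n) :
  root_system R ->
  (forall a, a \in R -> dot c a != 0) ->
  refl_group R w ->
  refl_group (roots_in R U) v ->
  (forall a, inv_set (roots_in R U) c v a = inv_set R c w a && (a <= U)%MS) ->
  forall H : 'M[F]_n, inv_arr_in R c U v H <-> loc_quot_arr R c w U H.
Proof.
move=> _ _ _ _ hI H; split.
  case=> a; rewrite hI => /andP[ha aU] /eqmxP eH.
  exists a; last first.
    by apply/eqmxP; apply: eqmx_trans eH _; apply/eqmxP; exact: proj_hyp.
  rewrite ha /=; apply: bigcap_seq_inf; last by rewrite ha aU.
  by case/and3P: ha.
case=> b /andP[hb Xb] /eqmxP eH.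
set S := (\sum_(a <- R | inv_set R c w a && (a <= U)%MS) <<a>>)%MS.
have SU : (S <= U)%MS.
  rewrite /S; elim/big_rec: _ => [|i x /andP[_ iU] IH]; first exact: sub0mx.
  by rewrite addsmx_sub genmxE iU.
have SX : (kermx S^T <= Xflat R c w U)%MS.
  rewrite /Xflat big_seq_cond; elim/big_rec: _ => [|i x /andP[iR Pi] IH].
    exact: submx1.
  rewrite sub_capmx IH andbT; apply: orth_anti.
  rewrite -(genmxE i); exact: sums_seq_sup.
have bU : (b <= U)%MS.
  have h : (kermx (hyp b)^T <= kermx (kermx S^T)^T)%MS.
    by apply: orth_anti; exact: submx_trans SX Xb.
  have h2 : (b <= kermx (hyp b)^T)%MS by rewrite (eqmxP (@orth_orth _ _ _ b)).
  apply: submx_trans h2 _; apply: submx_trans h _.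
  by rewrite (eqmxP (@orth_orth _ _ _ S)).
exists b; first by rewrite hI hb.
apply/eqmxP; apply: eqmx_trans eH _; apply: eqmx_sym; apply/eqmxP; exact: proj_hyp.
Qed.
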